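(* Let $W\ge1$ be an integer, $\xi\in\mathbb Z$ and $r\ge1$ an integer. For the one-dimensional band graph $\Gamma_{1,W}$, the Green's function $G_r$ of $B_r(\xi)$ satisfies, for all $x\in B_r(\xi)$, $$\frac1{2W^3}\big(rW+1-|x-\xi|\big)\le G_r(\xi,x)\le\frac1{W^2}\big(W+rW-|x-\xi|\big),$$ and the Poisson kernel satisfies, for all $x\in\partial B_r(\xi)$, $$\frac1{2W^3}\le P_r(\xi,x)\le1.$$
   Context: $\Gamma_{1,W}$ has vertex set $\mathbb Z$ with $x\sim y$ iff $0<|x-y|\le W$ (each vertex has degree $2W$). $B_r(\xi)=\{x\in\mathbb Z:|x-\xi|\le rW\}$ and $\partial B_r(\xi)=\{x:rW<|x-\xi|\le(r+1)W\}$. The Dirichlet Laplacian $-\Delta^{B_r}$ is the matrix on $\ell^2(B_r(\xi))$ with entries $2W\delta_{xy}-\mathbf 1_{0<|x-y|\le W}$, $x,y\in B_r(\xi)$; $G_r(x,y)=(-\Delta^{B_r})^{-1}(x,y)$ for $x,y\in B_r(\xi)$. The Poisson kernel is $P_r(\xi,x)=\sum_{y\in B_r(\xi),\,0<|x-y|\le W}G_r(\xi,y)$ for $x\in\partial B_r(\xi)$ (equivalently, $P_r(\cdot,x)$ is the harmonic function on $B_r(\xi)$ with boundary values $\delta_x$ on $\partial B_r(\xi)$). *)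

(* Defs.v *)
From HB Require Import structures.
From mathcomp Require Import all_boot all_order all_algebra.
Unset Printing Implicit Defensive.
Import Order.TTheory GRing.Theory Num.Theory.
Local Open Scope ring_scope.

Definition adjZ (W : nat) (x y : int) : bool :=
  (0 < `|x - y|) && (`|x - y| <= W%:Z).

Definition ballZ (W r : nat) (xi x : int) : bool := `|x - xi| <= (r * W)%:Z.

Definition bndZ (W r : nat) (xi x : int) : bool :=
  ((r * W)%:Z < `|x - xi|) && (`|x - xi| <= ((r + 1) * W)%:Z).

Definition bsz (W r : nat) : nat := (2 * r * W).+1.

(* The ball B_r(xi) has 2 r W + 1 points; index i : 'I_(2rW+1) corresponds
   to the point xi - r W + i. *)
Definition ptZ (W r : nat) (xi : int) (i : 'I_(bsz W r)) : int :=
  xi - (r * W)%:Z + (i : nat)%:Z.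

Definition idxZ (W r : nat) (xi x : int) : 'I_(bsz W r) :=
  inord (absz (x - xi + (r * W)%:Z)).

Definition dirLap (R : nzRingType) (W r : nat) (xi : int) : 'M[R]_(bsz W r) :=
  \matrix_(i, j) ((2 * W)%:R * (i == j)%:R
                  - (adjZ W (ptZ W r xi i) (ptZ W r xi j))%:R).

(* Green's function G_r(x,y) = (-Delta^{B_r})^{-1}(x,y) for x, y in B_r(xi)
   (set to 0 outside the ball; only used inside). *)
Definition greenZ (R : fieldType) (W r : nat) (xi x y : int) : R :=
  if ballZ W r xi x && ballZ W r xi y then
    invmx (dirLap R W r xi) (idxZ W r xi x) (idxZ W r xi y)
  else 0.

Definition poissonZ (R : fieldType) (W r : nat) (xi x : int) : R :=
  \sum_(j < bsz W r | adjZ W x (ptZ W r xi j))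
     greenZ R W r xi xi (ptZ W r xi j).

(* Main.v *)
Require Import Defs.
From HB Require Import structures.
From mathcomp Require Import all_boot all_order all_algebra.
From mathcomp Require Import zify ring lra.
Import Order.TTheory GRing.Theory Num.Theory.
Local Open Scope ring_scope.

Lemma sum_ind (R : realFieldType) (w : nat) (t : int) :
  \sum_(k < w) ((t == k.+1%:Z)%:R : R) = ((0 < t) && (t <= w%:Z))%:R.
Proof.
elim: w => [|w IH]; first by rewrite big_ord0; case E: ((0 < t) && (t <= 0%:Z)) => //; move: E; lia.
rewrite big_ord_recr /= IH.
case E1: ((0 < t) && (t <= w%:Z)); case E2: (t == w.+1%:Z);
  case E3: ((0 < t) && (t <= w.+1%:Z)) => //=; rewrite ?addr0 ?add0r //;
  move: E1 E2 E3; lia.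
Qed.

Lemma adj_sum (R : realFieldType) (W : nat) (a b : int) :
  ((Defs.adjZ W a b)%:R : R) = \sum_(k < W) (((a - b == k.+1%:Z))%:R + ((b - a == k.+1%:Z))%:R).
Proof.
rewrite big_split /= !sum_ind /Defs.adjZ.
case E1: ((0 < a - b) && (a - b <= W%:Z)); case E2: ((0 < b - a) && (b - a <= W%:Z));
  case E3: ((0 < `|a - b|) && (`|a - b| <= W%:Z)) => //=; rewrite ?addr0 ?add0r //;
  move: E1 E2 E3; lia.
Qed.

Lemma sum_nat1 (R : realFieldType) (w : nat) :
  \sum_(k < w) ((2 * k.+1)%:R : R) = (w * w.+1)%:R.
Proof.
rewrite -natr_sum; congr (_%:R).
elim: w => [|w IH]; first by rewrite big_ord0.
rewrite big_ord_recr /= IH. lia.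
Qed.

Lemma sum_nat0 (R : realFieldType) (w : nat) :
  \sum_(k < w) ((2 * k)%:R : R) = (w * w.-1)%:R.
Proof.
rewrite -natr_sum; congr (_%:R).
elim: w => [|w IH]; first by rewrite big_ord0.
rewrite big_ord_recr /= IH. case: w {IH} => //= w. lia.
Qed.

Section S.
Variables (R : realFieldType) (W r : nat) (xi : int).
Local Notation n := (bsz W r).
Local Notation L := (dirLap R W r xi).

Definition inr (z : int) : bool := (0 <= z) && (z < n%:Z).
Definition ext (f : int -> R) (z : int) : R := if inr z then f z else 0.
Definition vf (v : 'rV[R]_n) (z : int) : R := v 0 (inord (absz z)).

Lemma vfE (v : 'rV[R]_n) (m : 'I_n) : vf v m = v 0 m.
Proof. by rewrite /vf absz_nat inord_val. Qed.

Lemma sum_pick (v : 'rV[R]_n) (t : int) :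
  \sum_(i < n) v 0 i * (((i : nat)%:Z == t)%:R) = ext (vf v) t.
Proof.
rewrite /ext /inr /vf; case: ifP => H.
  have Ht : (absz t < n)%N by lia.
  rewrite (bigD1 (inord (absz t))) //= inordK // (_ : (absz t)%:Z == t) ?mulr1; last by lia.
  rewrite big1 ?addr0 // => i /negPf Hi.
  case E: ((i : nat)%:Z == t); rewrite ?mulr0 //.
  move: Hi; rewrite (_ : i = inord (absz t)) ?eqxx //.
  apply: val_inj; rewrite /= inordK //; lia.
rewrite big1 // => i _; case E: ((i : nat)%:Z == t); rewrite ?mulr0 //.
move: H E; have := ltn_ord i; lia.
Qed.

Lemma lapE (v : 'rV[R]_n) (m : 'I_n) :
  (v *m L) 0 m = (2 * W)%:R * v 0 m
     - \sum_(k < W) (ext (vf v) (m%:Z + k.+1%:Z) + ext (vf v) (m%:Z - k.+1%:Z)).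
Proof.
rewrite mxE; under eq_bigr => i _ do rewrite mxE mulrBr.
rewrite sumrB; congr (_ - _).
  rewrite (bigD1 m) //= eqxx mulr1 mulrC big1 ?addr0 // => i /negPf ->.
  by rewrite mulr0 mulr0.
under eq_bigr => i _ do rewrite adj_sum mulr_sumr.
rewrite exchange_big /=; apply: eq_bigr => k _.
rewrite -!sum_pick -big_split /=; apply: eq_bigr => i _.
rewrite -mulrDr; congr (_ * (_ + _)); congr (_%:R); rewrite /ptZ; lia.
Qed.


Lemma cmp (f : int -> R) : (0 < W)%N ->
  (forall m : 'I_n, 0 <= (2 * W)%:R * f (m : nat)%:Z
      - \sum_(k < W) (ext f ((m : nat)%:Z + k.+1%:Z) + ext f ((m : nat)%:Z - k.+1%:Z))) ->
  forall m : 'I_n, 0 <= f (m : nat)%:Z.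
Proof.
move=> W0 H i; rewrite leNgt; apply/negP => fi.
case: (@arg_minP _ _ _ i xpredT (fun j : 'I_n => f (j : nat)%:Z) isT) => m0 _ Hmin.
set mu := f (m0 : nat)%:Z.
have mu0 : mu < 0 by apply: le_lt_trans (Hmin i isT) fi.
have exP : exists k, (k < n)%N && (f k%:Z == mu) by exists m0; rewrite ltn_ord eqxx.
case: (ex_minnP exP) => k /andP[kn /eqP fk] kmin.
have Hge : forall z, mu <= ext f z.
  move=> z; rewrite /ext /inr; case: ifP => Hz; last exact: ltW.
  have zn : (absz z < n)%N by lia.
  have := Hmin (Ordinal zn) isT; rewrite /= (_ : (absz z)%:Z = z) //; lia.
have Hgt : mu < ext f (k%:Z - 1%:Z).
  rewrite /ext /inr; case: ifP => Hz //.
  have zn : (k.-1 < n)%N by lia.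
  have := Hmin (Ordinal zn) isT; rewrite /= (_ : (k.-1)%:Z = k%:Z - 1%:Z); last by lia.
  rewrite le_eqVlt => /orP[/eqP E|//].
  have := kmin k.-1; rewrite zn /= (_ : (k.-1)%:Z = k%:Z - 1%:Z); last by lia.
  rewrite -E eqxx => /(_ isT); lia.
have := H (Ordinal kn); rewrite /= fk.
case: W W0 => // w _.
rewrite big_ord_recl /=.
have Hs : \sum_(j < w) (mu + mu) <= \sum_(j < w)
   (ext f (k%:Z + (lift ord0 j).+1%:Z) + ext f (k%:Z - (lift ord0 j).+1%:Z)).
  by apply: ler_sum => j _; apply: lerD.
move: Hs; rewrite sumr_const card_ord.
have := Hge (k%:Z + 1%:Z); rewrite -mulr_natr.
set s := \sum_(j < w) _ => h1 h2.
have e : (w.+1%:R : R) = w%:R + 1 by rewrite mulrS addrC.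
move: h2; rewrite -mulr_natr ?e => h2. rewrite ?e.
nra.
Qed.


Definition Lf (f : int -> R) (m : int) : R :=
  (2 * W)%:R * f m - \sum_(k < W) (ext f (m + k.+1%:Z) + ext f (m - k.+1%:Z)).

Lemma LfB (f g : int -> R) m : Lf (fun z => f z - g z) m = Lf f m - Lf g m.
Proof.
rewrite /Lf /ext.
have -> : \sum_(k < W) ((if inr (m + k.+1%:Z) then f (m + k.+1%:Z) - g (m + k.+1%:Z) else 0) +
      (if inr (m - k.+1%:Z) then f (m - k.+1%:Z) - g (m - k.+1%:Z) else 0)) =
  \sum_(k < W) ((if inr (m + k.+1%:Z) then f (m + k.+1%:Z) else 0) +
      (if inr (m - k.+1%:Z) then f (m - k.+1%:Z) else 0)) -
  \sum_(k < W) ((if inr (m + k.+1%:Z) then g (m + k.+1%:Z) else 0) +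
      (if inr (m - k.+1%:Z) then g (m - k.+1%:Z) else 0)).
  rewrite -sumrB; apply: eq_bigr => k _.
  by case: ifP; case: ifP => _ _; ring.
ring.
Qed.

Lemma Lf_split (f : int -> R) m :
  Lf f m = \sum_(k < W) (f m + f m - ext f (m + k.+1%:Z) - ext f (m - k.+1%:Z)).
Proof.
rewrite /Lf [RHS](eq_bigr (fun k : 'I_W => (f m + f m) -
   (ext f (m + k.+1%:Z) + ext f (m - k.+1%:Z)))); last by move=> k _; ring.
by rewrite sumrB sumr_const card_ord -mulr_natl natrM; ring.
Qed.

Lemma lapE' (v : 'rV[R]_n) (m : 'I_n) : (v *m L) 0 m = Lf (vf v) (m : nat)%:Z.
Proof. by rewrite lapE /Lf vfE. Qed.

Lemma cmp' (f : int -> R) : (0 < W)%N ->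
  (forall m : 'I_n, 0 <= Lf f (m : nat)%:Z) -> forall m : 'I_n, 0 <= f (m : nat)%:Z.
Proof. by move=> W0 H; apply: cmp. Qed.

Lemma cmp_row (v : 'rV[R]_n) : (0 < W)%N ->
  (forall m, 0 <= (v *m L) 0 m) -> forall m, 0 <= v 0 m.
Proof.
move=> W0 H m; rewrite -vfE; apply: cmp' => // k; rewrite -lapE'; exact: H.
Qed.

Lemma L_unit : (0 < W)%N -> L \in unitmx.
Proof.
move=> W0; rewrite unitmxE unitfE; apply/det0P => [[v vn0 vL]].
move/negP: vn0; apply; apply/eqP/matrixP => i j; rewrite !mxE ord1.
have h1 : forall m, 0 <= v 0 m by apply: cmp_row => // m; rewrite vL mxE.
have h2 : forall m, 0 <= (- v) 0 m by apply: cmp_row => // m; rewrite mulNmx vL oppr0 mxE.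
apply/eqP; rewrite eq_le h1 andbT; have := h2 j; rewrite mxE; lra.
Qed.

Lemma L_tr : L^T = L.
Proof.
apply/matrixP => i j; rewrite !mxE eq_sym; congr (_ - (_%:R)).
rewrite /Defs.adjZ /ptZ; lia.
Qed.


Definition cc : 'I_n := inord (r * W).
Lemma ccE : (cc : nat) = (r * W)%N.
Proof. by rewrite inordK // /bsz; lia. Qed.

Definition u : 'rV[R]_n := row cc (invmx L).

Lemma Lf_u (W0 : (0 < W)%N) (m : 'I_n) :
  Lf (vf u) (m : nat)%:Z = ((m : nat)%:Z == (r * W)%:Z)%:R.
Proof.
rewrite -lapE' -row_mul mulVmx ?L_unit // !mxE eq_sym.
have -> // : (m == cc) = ((m : nat)%:Z == (r * W)%:Z).
apply/eqP/eqP => [->|h]; first by rewrite ccE.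
by apply: val_inj; rewrite /= ccE; lia.
Qed.

Lemma natz_R (k : nat) : ((k%:Z)%:~R : R) = k%:R.
Proof. by []. Qed.

Definition hh (z : int) : R := (W%:R + (r * W)%:R - (`|z - (r * W)%:Z|)%:~R) / W%:R ^+ 2.

Lemma hh_term (W0 : (0 < W)%N) m j : hh m + hh m - hh (m + j) - hh (m - j) =
  ((`|m + j - (r * W)%:Z| + `|m - j - (r * W)%:Z| - 2 * `|m - (r * W)%:Z|)%:~R) / W%:R ^+ 2.
Proof.
rewrite /hh !(intrD, intrN, intrM).
have w0 : (W%:R : R) != 0 by rewrite pnatr_eq0 -lt0n.
by field.
Qed.

Lemma ext_le (f : int -> R) z : (~~ inr z -> 0 <= f z) -> ext f z <= f z.
Proof. by rewrite /ext; case: ifP => // _ H; apply: H. Qed.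

Lemma green_up (W0 : (0 < W)%N) (m : 'I_n) : u 0 m <= hh (m : nat)%:Z.
Proof.
rewrite -vfE -subr_ge0.
move: m; apply: (cmp' (fun z => hh z - vf u z) W0) => k.
rewrite LfB Lf_u // subr_ge0 Lf_split.
set b := ((k : nat)%:Z == (r * W)%:Z).
set kz := (k : nat)%:Z.
have tb : forall j : 'I_W, (if b then (2 * j.+1)%:R / W%:R ^+ 2 else 0) <=
   hh kz + hh kz - ext hh (kz + j.+1%:Z) - ext hh (kz - j.+1%:Z).
  move=> j.
  have hk := ltn_ord k; have hj := ltn_ord j.
  have e1 : ext hh (kz + j.+1%:Z) <= hh (kz + j.+1%:Z).
    apply: ext_le => _; apply: divr_ge0; last by rewrite exprn_ge0.
    rewrite subr_ge0 -!natz_R -intrD ler_int /kz; move: hk; rewrite /bsz; lia.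
  have e2 : ext hh (kz - j.+1%:Z) <= hh (kz - j.+1%:Z).
    apply: ext_le => _; apply: divr_ge0; last by rewrite exprn_ge0.
    rewrite subr_ge0 -!natz_R -intrD ler_int /kz; move: hk; rewrite /bsz; lia.
  suff : (if b then (2 * j.+1)%:R / W%:R ^+ 2 else 0) <=
      hh kz + hh kz - hh (kz + j.+1%:Z) - hh (kz - j.+1%:Z) by lra.
  rewrite hh_term //; rewrite /b; case: ifP => hb.
    rewrite -natz_R; apply: ler_wpM2r; first by rewrite invr_ge0 exprn_ge0 // ler0n.
    rewrite ler_int /kz; move: hb; lia.
  apply: divr_ge0; last by rewrite exprn_ge0.
  rewrite ler0z /kz; lia.
apply: le_trans (ler_sum _ (fun j _ => tb j)).
clearbody b; case: b {tb}; last by rewrite big1.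
rewrite -mulr_suml sum_nat1 ler_pdivlMr ?exprn_gt0 ?ltr0n // mul1r -natrX ler_nat.
rewrite expnS expn1; apply: leq_mul => //.
Qed.


Definition gg (z : int) : R := ((r * W)%:R + 1 - (`|z - (r * W)%:Z|)%:~R) / (2 * W%:R ^+ 3).
Definition al : R := (W%:R - 1) / (2 * W%:R ^+ 2).
Definition ph (z : int) : R := gg z + al * (z == (r * W)%:Z)%:R.

Lemma gg_term (W0 : (0 < W)%N) m j : gg m + gg m - gg (m + j) - gg (m - j) =
  ((`|m + j - (r * W)%:Z| + `|m - j - (r * W)%:Z| - 2 * `|m - (r * W)%:Z|)%:~R) / (2 * W%:R ^+ 3).
Proof.
rewrite /gg !(intrD, intrN, intrM).
have w0 : (W%:R : R) != 0 by rewrite pnatr_eq0 -lt0n.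
by field.
Qed.

Lemma al_ge0 (W0 : (0 < W)%N) : 0 <= al.
Proof.
apply: divr_ge0; last by rewrite mulr_ge0 ?exprn_ge0 ?ler0n.
by rewrite subr_ge0 ler1n.
Qed.

Lemma green_lo (W0 : (0 < W)%N) (m : 'I_n) : gg (m : nat)%:Z <= u 0 m.
Proof.
suff : ph (m : nat)%:Z <= u 0 m.
  rewrite /ph; have := al_ge0 W0; case: (_ == _) => /=; last by rewrite mulr0 addr0.
  by rewrite mulr1; lra.
rewrite -vfE -subr_ge0.
move: m; apply: (cmp' (fun z => vf u z - ph z) W0) => k.
rewrite LfB Lf_u // subr_ge0 Lf_split.
set kz := (k : nat)%:Z.
set b := (kz == (r * W)%:Z).
set A := Defs.adjZ W (r * W)%:Z kz.
have tb : forall j : 'I_W, ph kz + ph kz - ext ph (kz + j.+1%:Z) - ext ph (kz - j.+1%:Z) <=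
    (if b then (2 * j.+1)%:R / (2 * W%:R ^+ 3) + (al + al)
     else (if A then (2 * j)%:R / (2 * W%:R ^+ 3) else 0)
          - al * ((((r * W)%:Z - kz == j.+1%:Z))%:R + ((kz - (r * W)%:Z == j.+1%:Z))%:R)).
  move=> j.
  have hk := ltn_ord k; have hj := ltn_ord j.
  have e0 : forall z, z != (r * W)%:Z -> `|z - (r * W)%:Z| >= (r * W)%:Z + 1 -> ph z <= 0.
    move=> z /negPf hz0 hz; rewrite /ph hz0 mulr0 addr0 /gg.
    apply: mulr_le0_ge0; last by rewrite invr_ge0 mulr_ge0 ?exprn_ge0 ?ler0n.
    rewrite subr_le0 -natz_R (_ : (1:R) = (1:int)%:~R) // -intrD ler_int; lia.
  have e1 : ph (kz + j.+1%:Z) <= ext ph (kz + j.+1%:Z).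
    rewrite /ext; case: ifP => // hin; apply: e0; move: hin; rewrite /kz /inr /bsz; lia.
  have e2 : ph (kz - j.+1%:Z) <= ext ph (kz - j.+1%:Z).
    rewrite /ext; case: ifP => // hin; apply: e0; move: hin; rewrite /kz /inr /bsz; lia.
  suff : ph kz + ph kz - ph (kz + j.+1%:Z) - ph (kz - j.+1%:Z) <=
    (if b then (2 * j.+1)%:R / (2 * W%:R ^+ 3) + (al + al)
     else (if A then (2 * j)%:R / (2 * W%:R ^+ 3) else 0)
          - al * ((((r * W)%:Z - kz == j.+1%:Z))%:R + ((kz - (r * W)%:Z == j.+1%:Z))%:R)) by lra.
  have -> : ph kz + ph kz - ph (kz + j.+1%:Z) - ph (kz - j.+1%:Z) =
     (gg kz + gg kz - gg (kz + j.+1%:Z) - gg (kz - j.+1%:Z)) +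
     al * (b%:R + b%:R - ((kz + j.+1%:Z == (r * W)%:Z))%:R - ((kz - j.+1%:Z == (r * W)%:Z))%:R).
    by rewrite /ph /b; ring.
  rewrite gg_term //.
  have den : 0 <= (2 * W%:R ^+ 3 : R)^-1 by rewrite invr_ge0 mulr_ge0 ?exprn_ge0 ?ler0n.
  rewrite /b; case: ifP => hb.
    have -> : (kz + j.+1%:Z == (r * W)%:Z) = false by move: hb; lia.
    have -> : (kz - j.+1%:Z == (r * W)%:Z) = false by move: hb; lia.
    rewrite (_ : al * (true%:R + true%:R - false%:R - false%:R) = al + al); last by rewrite /=; ring.
    rewrite lerD2r -(natz_R (2 * j.+1)); apply: ler_wpM2r => //; rewrite ler_int; move: hb; lia.
  have -> : (kz + j.+1%:Z == (r * W)%:Z) = ((r * W)%:Z - kz == j.+1%:Z) by apply/idP/idP; lia.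
  have -> : (kz - j.+1%:Z == (r * W)%:Z) = (kz - (r * W)%:Z == j.+1%:Z) by apply/idP/idP; lia.
  set i1 := (((r * W)%:Z - kz == j.+1%:Z))%:R; set i2 := ((kz - (r * W)%:Z == j.+1%:Z))%:R.
  suff : (`|kz + j.+1%:Z - (r * W)%:Z| + `|kz - j.+1%:Z - (r * W)%:Z| - 2 * `|kz - (r * W)%:Z|)%:~R
     / (2 * W%:R ^+ 3) <= (if A then (2 * j)%:R / (2 * W%:R ^+ 3) else 0 : R).
    move=> h; have : al * (false%:R + false%:R - i1 - i2) = - (al * (i1 + i2)) by rewrite /=; ring.
    by move=> e; rewrite e lerD2r.
  rewrite /A /Defs.adjZ; case: ifP => hA.
    rewrite -(natz_R (2 * j)); apply: ler_wpM2r => //; rewrite ler_int; move: hb hA; lia.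
  rewrite (_ : (`|kz + j.+1%:Z - (r * W)%:Z| + `|kz - j.+1%:Z - (r * W)%:Z| - 2 * `|kz - (r * W)%:Z|) = 0) ?mul0r //; move: hb hA; rewrite /kz; lia.
apply: le_trans (ler_sum _ (fun j _ => tb j)) _.
have eW1 : (W.+1%:R : R) = W%:R + 1 by rewrite mulrS addrC.
have w0 : (W%:R : R) != 0 by rewrite pnatr_eq0 -lt0n.
have w1 : (1 : R) <= W%:R by rewrite ler1n.
clearbody b; case: b {tb} => /=.
  rewrite big_split /= -mulr_suml sum_nat1 sumr_const card_ord natrM eW1 /al.
  rewrite -[(_ + _) *+ W]mulr_natr ?mul1r.
  have key : forall w : R, 1 <= w -> w * (w + 1) / (2 * w ^+ 3) + ((w - 1) / (2 * w ^+ 2) +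
     (w - 1) / (2 * w ^+ 2)) * w <= 1.
    move=> w hw; have wn0 : w != 0 by apply/eqP => e; rewrite e in hw; lra.
    have -> : w * (w + 1) / (2 * w ^+ 3) + ((w - 1) / (2 * w ^+ 2) +
     (w - 1) / (2 * w ^+ 2)) * w = 1 - (w - 1) / (2 * w ^+ 2) by field.
    rewrite lerBlDr lerDl; apply: divr_ge0; first lra.
    by rewrite mulr_ge0 ?exprn_ge0 //; lra.
  exact: key.
rewrite sumrB -mulr_sumr -adj_sum -/A.
case: A => /=; last by rewrite big1 // mulr0 subr0.
rewrite -mulr_suml sum_nat0 mulr1 /al subr_le0.
case: W W0 w0 w1 eW1 => // w _ w0 w1 eW1 /=.
have e : (w.+1%:R : R) = w%:R + 1 by rewrite mulrS addrC.
rewrite natrM e; rewrite e in w0.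
rewrite le_eqVlt; apply/orP; left; apply/eqP; field.
by [].
Qed.


Lemma idx_pt (j : 'I_n) : idxZ W r xi (ptZ W r xi j) = j.
Proof.
apply: val_inj; rewrite /idxZ /ptZ /= inordK; have := ltn_ord j; rewrite /bsz; lia.
Qed.

Lemma idx_xi : idxZ W r xi xi = cc.
Proof. by rewrite /idxZ subrr add0r. Qed.

Lemma greenE x : ballZ W r xi x -> greenZ R W r xi xi x = u 0 (idxZ W r xi x).
Proof.
move=> hx; rewrite /greenZ hx (_ : ballZ W r xi xi = true); last by rewrite /ballZ; lia.
by rewrite /= idx_xi /u mxE.
Qed.

Lemma idx_val x : ballZ W r xi x -> ((idxZ W r xi x : nat)%:Z) = x - xi + (r * W)%:Z.
Proof. rewrite /ballZ /idxZ => hx /=; rewrite inordK; rewrite /bsz; lia. Qed.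

Lemma poissonE x : poissonZ R W r xi x =
  \sum_(j < n | Defs.adjZ W x (ptZ W r xi j)) u 0 j.
Proof.
apply: eq_bigr => j _; rewrite greenE ?idx_pt //.
rewrite /ballZ /ptZ; have := ltn_ord j; rewrite /bsz; lia.
Qed.

Lemma u_ge0 (W0 : (0 < W)%N) (j : 'I_n) : 0 <= u 0 j.
Proof.
apply: le_trans (green_lo W0 j); apply: divr_ge0; last by rewrite mulr_ge0 ?exprn_ge0 ?ler0n.
rewrite subr_ge0 -natz_R (_ : (1:R) = (1:int)%:~R) // -intrD ler_int.
have := ltn_ord j; rewrite /bsz; lia.
Qed.

Lemma poisson_lo (W0 : (0 < W)%N) x : bndZ W r xi x -> 1 / (2 * W%:R ^+ 3) <= poissonZ R W r xi x.
Proof.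
move=> hx; rewrite poissonE.
set j0 : 'I_n := inord (if (0 < x - xi) then (2 * r * W)%N else 0%N).
have j0v : (j0 : nat) = (if (0 < x - xi) then (2 * r * W)%N else 0%N).
  by rewrite inordK //; case: ifP.
have hadj : Defs.adjZ W x (ptZ W r xi j0).
  move: hx; rewrite /bndZ /Defs.adjZ /ptZ j0v; case: ifP => h; lia.
rewrite (bigD1 j0) //=; apply: le_trans (_ : u 0 j0 <= _); last first.
  by rewrite lerDl; apply: sumr_ge0 => j _; apply: u_ge0.
apply: le_trans (green_lo W0 j0); rewrite /gg j0v.
rewrite le_eqVlt; apply/orP; left; apply/eqP; congr (_ / _).
have -> : `|(if 0 < x - xi then (2 * r * W)%N else 0%N)%:Z - (r * W)%:Z| = (r * W)%:Z.
  by case: ifP => h; lia.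
by rewrite natz_R addrC addKr.
Qed.

Definition bv (x : int) : 'rV[R]_n := \row_j (Defs.adjZ W x (ptZ W r xi j))%:R.

Lemma poisson_up (W0 : (0 < W)%N) x : bndZ W r xi x -> poissonZ R W r xi x <= 1.
Proof.
move=> hx; rewrite poissonE.
set q := bv x *m invmx L.
have qL : q *m L = bv x by rewrite /q -mulmxA mulVmx ?L_unit // mulmx1.
have -> : \sum_(j < n | Defs.adjZ W x (ptZ W r xi j)) u 0 j = q 0 cc.
  rewrite /q mxE big_mkcond /=; apply: eq_bigr => j _.
  rewrite /bv /u !mxE.
  have -> : invmx L j cc = invmx L cc j.
    by rewrite -[in RHS]L_tr -trmx_inv mxE.
  by case: ifP; rewrite ?mul1r ?mul0r.
rewrite -subr_ge0 -(vfE q).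
move: cc; apply: (cmp' (fun z => 1 - vf q z) W0) => m.
rewrite (LfB (fun _ => 1)) -lapE' qL Lf_split subr_ge0 /bv mxE.
set zx := x - xi + (r * W)%:Z.
have hzx : ~~ inr zx by move: hx; rewrite /bndZ /inr /zx /bsz; lia.
rewrite (_ : Defs.adjZ W x (ptZ W r xi m) = Defs.adjZ W zx (m : nat)%:Z); last first.
  by rewrite /Defs.adjZ /ptZ /zx; congr (_ && _); lia.
rewrite adj_sum; apply: ler_sum => j _.
rewrite /ext.
case H1: (inr _); case H2: (inr _); case E1: (_ == _); case E2: (_ == _) => //=;
  rewrite ?addr0 ?add0r ?subr0 ?sub0r; try lra;
  move: H1 H2 E1 E2 hzx; rewrite /inr; lia.
Qed.

End S.

Theorem lemmaB1 (R : realFieldType) (W r : nat) (xi : int) :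
  (1 <= W)%N -> (1 <= r)%N ->
  (forall x : int, ballZ W r xi x ->
     ((r * W)%:R + 1 - (`|x - xi|)%:~R) / (2 * W%:R ^+ 3) <= greenZ R W r xi xi x
     /\ greenZ R W r xi xi x <= (W%:R + (r * W)%:R - (`|x - xi|)%:~R) / W%:R ^+ 2)
  /\
  (forall x : int, bndZ W r xi x ->
     1 / (2 * W%:R ^+ 3) <= poissonZ R W r xi x /\ poissonZ R W r xi x <= 1).
Proof.
move=> W0 r1; split=> x hx.
  rewrite greenE //; split.
    by have := @green_lo R W r xi W0 (idxZ W r xi x); rewrite /gg idx_val // addrK.
  by have := @green_up R W r xi W0 (idxZ W r xi x); rewrite /hh idx_val // addrK.
by split; [apply: poisson_lo | apply: poisson_up].
Qed.
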